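(* Let $a,b,c,d>0$, $\mu\in(0,1]$, $u>(c+d)/2$, and consider on $\mathcal{I}=[0,1]^2$ the controlled system $$\dot x=x(1-x)\big[xr(-c+d-a+b)+x(a-b)-r(d+b)+b+u\big]+\mu(1-2x),\qquad \dot r=r(1-r)(2x-1).$$ Let $(x_t^*,1)$ be the equilibrium of this system on the side $\{r=1\}$ with $x_t^*\in(1/2,1)$. Then $(x_t^*,1)$ is locally asymptotically stable, while all other equilibria of the system (if any exist) are unstable.
   Context: For these parameters there is exactly one equilibrium $(x_t^*,1)$ on $\{(x,1):x\in[0,1]\}$ with $x_t^*\in(1/2,1)$; any other equilibria on that side lie in $\{(x,1):x\in(0,1/2)\}$. *)

(* Defs.v *)
From Stdlib Require Import Reals.
From Coquelicot Require Import Coquelicot.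
Open Scope R_scope.

Definition Fx (a b c d mu u x r : R) : R :=
  x * (1 - x) * (x * r * (- c + d - a + b) + x * (a - b) - r * (d + b) + b + u)
  + mu * (1 - 2 * x).

Definition Fr (x r : R) : R := r * (1 - r) * (2 * x - 1).

Definition inI (x r : R) : Prop := 0 <= x <= 1 /\ 0 <= r <= 1.

Definition dist2 (x r x0 r0 : R) : R := sqrt ((x - x0) ^ 2 + (r - r0) ^ 2).

Definition is_solution (a b c d mu u : R) (X Y : R -> R) : Prop :=
  (forall t, 0 < t ->
     is_derive X t (Fx a b c d mu u (X t) (Y t)) /\
     is_derive Y t (Fr (X t) (Y t))) /\
  filterlim X (at_right 0) (locally (X 0)) /\
  filterlim Y (at_right 0) (locally (Y 0)).

Definition is_equilibrium (a b c d mu u x r : R) : Prop :=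
  inI x r /\ Fx a b c d mu u x r = 0 /\ Fr x r = 0.

Definition lyap_stable (a b c d mu u x0 r0 : R) : Prop :=
  forall eps, 0 < eps -> exists delta, 0 < delta /\
    forall X Y, is_solution a b c d mu u X Y -> inI (X 0) (Y 0) ->
      dist2 (X 0) (Y 0) x0 r0 < delta ->
      forall t, 0 <= t -> dist2 (X t) (Y t) x0 r0 < eps.

Definition attractive (a b c d mu u x0 r0 : R) : Prop :=
  exists delta, 0 < delta /\
    forall X Y, is_solution a b c d mu u X Y -> inI (X 0) (Y 0) ->
      dist2 (X 0) (Y 0) x0 r0 < delta ->
      filterlim X (Rbar_locally p_infty) (locally x0) /\
      filterlim Y (Rbar_locally p_infty) (locally r0).

Definition loc_asymp_stable (a b c d mu u x0 r0 : R) : Prop :=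
  lyap_stable a b c d mu u x0 r0 /\ attractive a b c d mu u x0 r0.

Definition unstable (a b c d mu u x0 r0 : R) : Prop :=
  ~ lyap_stable a b c d mu u x0 r0.

(* Main.v *)
Require Import Defs.
From Stdlib Require Import Reals Lra Psatz Classical.
From Coquelicot Require Import Coquelicot.
Open Scope R_scope.

Lemma ball_R (x e y : R) : ball x e y <-> Rabs (y - x) < e.
Proof. reflexivity. Qed.

Definition rce (f : R -> R) (t : R) : Prop :=
  forall e, 0 < e -> exists d, 0 < d /\ forall s, t < s < t + d -> Rabs (f s - f t) < e.

Lemma rce_of_filterlim f t : filterlim f (at_right t) (locally (f t)) -> rce f t.
Proof.
  intros H e He.
  assert (H1 := H (ball (f t) (mkposreal e He)) (locally_ball _ _)).
  destruct H1 as [d Hd].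
  exists d; split; [apply cond_pos|].
  intros s Hs. apply (Hd s); [apply ball_R; rewrite Rabs_right; lra | lra].
Qed.

Lemma cont_eps f t : continuous f t ->
  forall e, 0 < e -> exists d, 0 < d /\ forall s, Rabs (s - t) < d -> Rabs (f s - f t) < e.
Proof.
  intros H e He.
  assert (H1 := H (ball (f t) (mkposreal e He)) (locally_ball _ _)).
  destruct H1 as [d Hd].
  exists d; split; [apply cond_pos|].
  intros s Hs. apply (Hd s). apply ball_R. exact Hs.
Qed.

Lemma rce_of_cont f t : continuous f t -> rce f t.
Proof.
  intros H e He. destruct (cont_eps f t H e He) as [d [Hd H2]].
  exists d; split; auto. intros s Hs; apply H2. rewrite Rabs_right; lra.
Qed.

Lemma rce_lin f g t al be ga : rce f t -> rce g t ->
  rce (fun s => al * f s + be * g s + ga) t.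
Proof.
  intros Hf Hg e He.
  set (K := Rabs al + Rabs be + 1).
  assert (HK : 0 < K) by (unfold K; pose proof (Rabs_pos al); pose proof (Rabs_pos be); lra).
  destruct (Hf (e / K)) as [d1 [Hd1 H1]]. apply Rdiv_lt_0_compat; lra.
  destruct (Hg (e / K)) as [d2 [Hd2 H2]]. apply Rdiv_lt_0_compat; lra.
  exists (Rmin d1 d2); split. apply Rmin_pos; lra.
  intros s Hs.
  assert (s1 : t < s < t + d1) by (pose proof (Rmin_l d1 d2); lra).
  assert (s2 : t < s < t + d2) by (pose proof (Rmin_r d1 d2); lra).
  specialize (H1 s s1). specialize (H2 s s2).
  replace (al * f s + be * g s + ga - (al * f t + be * g t + ga))
    with (al * (f s - f t) + be * (g s - g t)) by ring.
  eapply Rle_lt_trans. apply Rabs_triang. rewrite !Rabs_mult.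
  assert (Rabs al * Rabs (f s - f t) <= Rabs al * (e / K)).
  { apply Rmult_le_compat_l; [apply Rabs_pos | lra]. }
  assert (Rabs be * Rabs (g s - g t) <= Rabs be * (e / K)).
  { apply Rmult_le_compat_l; [apply Rabs_pos | lra]. }
  assert ((Rabs al + Rabs be) * (e / K) < e).
  { assert (K * (e / K) = e) by (field; lra).
    assert (0 < e / K) by (apply Rdiv_lt_0_compat; lra).
    unfold K in *. nra. }
  nra.
Qed.

Lemma rce_exp k t : rce (fun s => exp (k * s)) t.
Proof.
  apply rce_of_cont. apply (ex_derive_continuous (K:=R_AbsRing) (V:=R_NormedModule)). auto_derive. auto.
Qed.

Lemma barrier_step f t : 0 <= t -> f t <= 0 -> rce f t ->
  (f t = 0 -> exists D, D < 0 /\ is_derive f t D) ->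
  exists eps, 0 < eps /\ forall s, t < s < t + eps -> f s < 0.
Proof.
  intros Ht Hf Hr Hd.
  destruct (Req_dec (f t) 0) as [E|E].
  - destruct (Hd E) as [D [HD Hder]].
    apply is_derive_Reals in Hder.
    destruct (Hder (- D / 2)) as [del Hdel]. lra.
    exists del; split. apply cond_pos.
    intros s Hs.
    assert (Hh : s - t <> 0) by lra.
    assert (Hh2 : Rabs (s - t) < del) by (rewrite Rabs_right; lra).
    specialize (Hdel (s - t) Hh Hh2).
    replace (t + (s - t)) with s in Hdel by ring.
    rewrite E in Hdel.
    apply Rabs_def2 in Hdel. destruct Hdel as [H1 H2].
    assert ((f s - 0) / (s - t) < 0) by lra.
    assert (0 < s - t) by lra.
    unfold Rdiv in H. 
    destruct (Rle_or_lt 0 (f s)); auto.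
    assert (0 <= (f s - 0) * / (s - t)).
    { apply Rmult_le_pos. lra. left. apply Rinv_0_lt_compat. lra. }
    lra.
  - assert (Hlt : f t < 0) by lra.
    destruct (Hr (- f t)) as [d [Hd0 Hd1]]. lra.
    exists d; split; auto. intros s Hs. specialize (Hd1 s Hs).
    apply Rabs_def2 in Hd1. lra.
Qed.

Lemma barrier_close f t : 0 < t -> continuous f t ->
  (forall s, 0 <= s < t -> f s <= 0) -> f t <= 0.
Proof.
  intros Ht Hc H.
  destruct (Rle_or_lt (f t) 0) as [|Hlt]; auto.
  destruct (cont_eps f t Hc (f t) Hlt) as [d [Hd H2]].
  set (s := t - Rmin d t / 2).
  assert (Hm : 0 < Rmin d t) by (apply Rmin_pos; lra).
  assert (Hm1 := Rmin_l d t). assert (Hm2 := Rmin_r d t).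
  assert (Hs : 0 <= s < t) by (unfold s; lra).
  specialize (H s Hs).
  assert (Rabs (s - t) < d) by (unfold s; rewrite Rabs_left; lra).
  specialize (H2 s H0). apply Rabs_def2 in H2. lra.
Qed.

Lemma cont_ind (P : R -> Prop) :
  (forall t, 0 <= t -> (forall s, 0 <= s < t -> P s) -> P t) ->
  (forall t, 0 <= t -> (forall s, 0 <= s <= t -> P s) ->
     exists eps, 0 < eps /\ forall s, t < s < t + eps -> P s) ->
  forall t, 0 <= t -> P t.
Proof.
  intros H1 H2 t1 Ht1.
  apply NNPP; intro Hn.
  set (E := fun t => 0 <= t /\ forall s, 0 <= s <= t -> P s).
  assert (HP0 : P 0) by (apply H1; [lra| intros; lra]).
  assert (Hb : bound E).
  { exists t1. intros t [Ht Hs]. destruct (Rle_or_lt t t1); auto.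
    exfalso. apply Hn. apply Hs. lra. }
  assert (He : exists x, E x).
  { exists 0. split; [lra|]. intros s Hs. replace s with 0 by lra. auto. }
  destruct (completeness E Hb He) as [S [HSu HSl]].
  assert (HS0 : 0 <= S) by (apply HSu; split; [lra|]; intros s Hs; replace s with 0 by lra; auto).
  assert (Hbelow : forall s, 0 <= s < S -> P s).
  { intros s Hs. apply NNPP; intro Hns.
    assert (S <= s). { apply HSl. intros t [Ht Ht2]. destruct (Rle_or_lt t s); auto.
      exfalso; apply Hns; apply Ht2; lra. }
    lra. }
  assert (HPS : P S) by (apply H1; auto).
  assert (HES : forall s, 0 <= s <= S -> P s).
  { intros s Hs. destruct (Req_dec s S). subst; auto. apply Hbelow; lra. }
  destruct (H2 S HS0 HES) as [eps [Heps H3]].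
  assert (E (S + eps / 2)).
  { split. lra. intros s Hs. destruct (Rle_or_lt s S). apply HES; lra. apply H3; lra. }
  assert (S + eps / 2 <= S) by (apply HSu; auto). lra.
Qed.

Lemma Fx_r1 a b c d mu u x :
  Fx a b c d mu u x 1 =
  (1/4 - (x - 1/2)^2) * ((u - (c + d)/2) - (c - d) * (x - 1/2)) - 2 * mu * (x - 1/2).
Proof. unfold Fx. field. Qed.

Lemma Fx_pert a b c d mu u x r :
  Fx a b c d mu u x r = Fx a b c d mu u x 1 +
    (r - 1) * (x * (1 - x) * (x * (- c + d - a + b) - (d + b))).
Proof. unfold Fx. field. Qed.

Lemma pert_bound a b c d x : 0 < b -> 0 < d -> 0 <= x <= 1 ->
  Rabs (x * (1 - x) * (x * (- c + d - a + b) - (d + b))) <= Rabs (- c + d - a + b) + (d + b).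
Proof.
  intros hb hd hx.
  rewrite Rabs_mult.
  assert (H1 : Rabs (x * (1 - x)) <= 1).
  { rewrite Rabs_right; nra. }
  assert (H2 : Rabs (x * (- c + d - a + b) - (d + b)) <= Rabs (- c + d - a + b) + (d + b)).
  { pose proof (Rle_abs (- c + d - a + b)). pose proof (Rle_abs (- (- c + d - a + b))).
    rewrite Rabs_Ropp in H0. apply Rabs_le. split; nra. }
  pose proof (Rabs_pos (x * (1 - x))). pose proof (Rabs_pos (x * (- c + d - a + b) - (d + b))).
  nra.
Qed.

Lemma key_ineq (p q mu ys y : R) : 0 < p -> 0 < mu -> 0 < ys < 1/2 -> 0 <= y < 1/2 ->
  (1/4 - ys^2) * (p - q * ys) - 2 * mu * ys = 0 ->
  (y - ys) * ((1/4 - y^2) * (p - q * y) - 2 * mu * y) <= - (y - ys)^2 * (1/4 - y^2) * (2 * p).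
Proof.
  intros hp hmu hys hy heq.
  set (G := (1/4 - y^2) * (p - q * y) - 2 * mu * y).
  set (Bk := (1/4 - y^2) * p + y * (ys + y) * (p - q * ys)).
  assert (E : ys * G = (ys - y) * Bk + y * ((1/4 - ys^2) * (p - q * ys) - 2 * mu * ys))
    by (unfold G, Bk; field).
  rewrite heq, Rmult_0_r, Rplus_0_r in E.
  assert (Hpq : 0 < p - q * ys).
  { assert (0 < 1/4 - ys^2) by nra. nra. }
  assert (HB : (1/4 - y^2) * p <= Bk).
  { unfold Bk. assert (0 <= y * (ys + y)) by nra. nra. }
  assert (H1 : ys * ((y - ys) * G) <= - (y - ys)^2 * ((1/4 - y^2) * p)).
  { replace (ys * ((y - ys) * G)) with ((y - ys) * (ys * G)) by ring. rewrite E.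
    replace ((y - ys) * ((ys - y) * Bk)) with (- ((y - ys)^2 * Bk)) by ring.
    replace (- (y - ys)^2 * ((1/4 - y^2) * p)) with (- ((y - ys)^2 * ((1/4 - y^2) * p))) by ring.
    apply Ropp_le_contravar. apply Rmult_le_compat_l; [apply pow2_ge_0|exact HB]. }
  assert (H2 : - (y - ys)^2 * ((1/4 - y^2) * p) <= ys * (- (y - ys)^2 * (1/4 - y^2) * (2 * p))).
  { assert (0 <= (y - ys)^2 * ((1/4 - y^2) * p)).
    { apply Rmult_le_pos. apply pow2_ge_0. apply Rmult_le_pos; nra. }
    replace (ys * (- (y - ys)^2 * (1/4 - y^2) * (2 * p))) with (- (2 * ys) * ((y - ys)^2 * ((1/4 - y^2) * p))) by ring.
    nra. }
  apply (Rmult_le_reg_l ys). lra. lra.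
Qed.

Section Sys.
Variables a b c d mu u xs : R.
Hypotheses (ha : 0 < a) (hb : 0 < b) (hc : 0 < c) (hd : 0 < d)
  (hmu : 0 < mu <= 1) (hu : (c + d) / 2 < u)
  (hxs : 1 / 2 < xs < 1) (heq : Fx a b c d mu u xs 1 = 0).

Lemma key_x x : 1/2 <= x < 1 ->
  (x - xs) * Fx a b c d mu u x 1 <= - (x - xs)^2 * (1/4 - (x - 1/2)^2) * (2 * (u - (c + d)/2)).
Proof.
  intros hx. rewrite Fx_r1. rewrite Fx_r1 in heq.
  replace (x - xs) with ((x - 1/2) - (xs - 1/2)) by ring.
  apply key_ineq with (q := c - d); lra.
Qed.

Lemma eq_r1_unique x : 1/2 <= x <= 1 -> Fx a b c d mu u x 1 = 0 -> x = xs.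
Proof.
  intros hx hF.
  destruct (Req_dec x 1) as [ -> | h1 ].
  - unfold Fx in hF. lra.
  - assert (H := key_x x ltac:(lra)). rewrite hF, Rmult_0_r in H.
    assert (0 < (1/4 - (x - 1/2)^2) * (2 * (u - (c + d)/2))).
    { apply Rmult_lt_0_compat; nra. }
    assert ((x - xs)^2 <= 0) by nra. nra.
Qed.

Lemma other_equilibria x r : is_equilibrium a b c d mu u x r -> (x, r) <> (xs, 1) ->
  (r = 1 /\ 0 < x < 1/2) \/ (r = 0 /\ 1/2 < x < 1).
Proof.
  intros [[hx hr] [hF hR]] hne.
  assert (hx0 : x <> 0) by (intro; subst; unfold Fx in hF; lra).
  assert (hx1 : x <> 1) by (intro; subst; unfold Fx in hF; lra).
  unfold Fr in hR.
  assert (Hc : r = 0 \/ r = 1 \/ x = 1/2).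
  { destruct (Req_dec r 0); auto. destruct (Req_dec r 1); auto. right; right.
    assert (r * (1 - r) <> 0) by (apply Rmult_integral_contrapositive; split; lra).
    apply Rmult_integral in hR. destruct hR; [contradiction|lra]. }
  destruct Hc as [ -> | [ -> | -> ] ].
  - right. split; auto. split; [|lra].
    destruct (Rle_or_lt x (1/2)) as [h|h]; auto. exfalso.
    unfold Fx in hF.
    assert (0 < x * (1 - x) * (x * (a - b) + b + u)) by
      (apply Rmult_lt_0_compat; [nra | nra]).
    nra.
  - left. split; auto. split; [lra|].
    destruct (Rlt_or_le x (1/2)) as [h|h]; auto. exfalso.
    apply hne. f_equal. apply eq_r1_unique; lra.
  - exfalso. unfold Fx in hF. nra.
Qed.
End Sys.

Lemma deriv_cont (f : R -> R) t D : is_derive f t D -> continuous f t.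
Proof.
  intros H. apply (ex_derive_continuous (K:=R_AbsRing) (V:=R_NormedModule)).
  exists D. exact H.
Qed.

Lemma min_eps_fam (n : nat) (Q : nat -> R -> Prop) :
  (forall i e1 e2, 0 < e1 <= e2 -> Q i e2 -> Q i e1) ->
  (forall i, (i < n)%nat -> exists e, 0 < e /\ Q i e) ->
  exists e, 0 < e /\ forall i, (i < n)%nat -> Q i e.
Proof.
  intros Hmono. induction n as [|n IH]; intros H.
  - exists 1. split; [lra|]. intros i Hi. lia.
  - destruct IH as [e1 [He1 H1]]. { intros i Hi. apply H. lia. }
    destruct (H n ltac:(lia)) as [e2 [He2 H2]].
    exists (Rmin e1 e2). split. apply Rmin_pos; lra.
    intros i Hi. destruct (Nat.eq_dec i n) as [->|Hne].
    + apply Hmono with e2; auto. split. apply Rmin_pos; lra. apply Rmin_r.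
    + apply Hmono with e1; auto. split. apply Rmin_pos; lra. apply Rmin_l.
      apply H1. lia.
Qed.

Lemma cont_ind_fam (n : nat) (f f' : nat -> R -> R) :
  (forall i, (i < n)%nat -> rce (f i) 0) ->
  (forall i s, (i < n)%nat -> 0 < s -> is_derive (f i) s (f' i s)) ->
  (forall i, (i < n)%nat -> f i 0 < 0) ->
  (forall i t, (i < n)%nat -> 0 < t -> (forall j, (j < n)%nat -> f j t <= 0) ->
     f i t = 0 -> f' i t < 0) ->
  forall t, 0 <= t -> forall i, (i < n)%nat -> f i t <= 0.
Proof.
  intros Hr Hd H0 Hc.
  apply (cont_ind (fun t => forall i, (i < n)%nat -> f i t <= 0)).
  - intros t Ht Hb i Hi. destruct (Req_dec t 0) as [->|Hne].
    + left; auto.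
    + apply barrier_close. lra. eapply deriv_cont. apply Hd; auto; lra.
      intros s Hs. apply Hb; auto.
  - intros t Ht Hb.
    assert (Hall : forall i, (i < n)%nat -> exists e, 0 < e /\ forall s, t < s < t + e -> f i s < 0).
    { intros i Hi. apply barrier_step; auto.
      - apply Hb; auto; lra.
      - destruct (Req_dec t 0) as [->|Hne]. apply Hr; auto.
        apply rce_of_cont. eapply deriv_cont. apply Hd; auto; lra.
      - intros E. destruct (Req_dec t 0) as [->|Hne].
        + specialize (H0 i Hi). lra.
        + exists (f' i t). split. apply Hc; auto. lra. intros j Hj; apply Hb; auto; lra.
          apply Hd; auto; lra. }
    destruct (min_eps_fam n (fun i e => forall s, t < s < t + e -> f i s < 0)) as [e [He H]].
    { intros i e1 e2 Hle Hq s Hs. apply Hq. lra. }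
    exact Hall.
    exists e. split; auto. intros s Hs i Hi. left. apply H; auto.
Qed.

Lemma deriv_lin (F : R -> R) dF al be k ga t : is_derive F t dF ->
  is_derive (fun s => al * F s + be * exp (k * s) + ga) t (al * dF + be * (k * exp (k * t))).
Proof.
  intros H.
  assert (HD : Derive F t = dF) by (apply is_derive_unique; auto).
  assert (HE : ex_derive F t) by (exists dF; auto).
  rewrite <- HD.
  auto_derive. auto. simpl. ring_simplify. reflexivity.
Qed.

Lemma Rabs_le_between a b : Rabs a <= b -> - b <= a <= b.
Proof. intros H. pose proof (Rle_abs a). pose proof (Rle_abs (- a)). rewrite Rabs_Ropp in H1. lra. Qed.

Lemma exp_le_mono x y : x <= y -> exp x <= exp y.
Proof. intros [H|H]. left; apply exp_increasing; auto. subst; lra. Qed.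

Lemma dist2_le x r x0 r0 : dist2 x r x0 r0 <= Rabs (x - x0) + Rabs (r - r0).
Proof.
  unfold dist2. rewrite <- (sqrt_pow2 (Rabs (x - x0) + Rabs (r - r0))).
  2: { pose proof (Rabs_pos (x - x0)); pose proof (Rabs_pos (r - r0)); lra. }
  apply sqrt_le_1_alt.
  rewrite <- (pow2_abs (x - x0)), <- (pow2_abs (r - r0)).
  pose proof (Rabs_pos (x - x0)); pose proof (Rabs_pos (r - r0)). nra.
Qed.

Lemma dist2_ge1 x r x0 r0 : Rabs (x - x0) <= dist2 x r x0 r0.
Proof.
  unfold dist2. rewrite <- (sqrt_pow2 (Rabs (x - x0))) by apply Rabs_pos.
  apply sqrt_le_1_alt. rewrite pow2_abs. pose proof (pow2_ge_0 (r - r0)). lra.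
Qed.

Lemma dist2_ge2 x r x0 r0 : Rabs (r - r0) <= dist2 x r x0 r0.
Proof.
  unfold dist2. rewrite <- (sqrt_pow2 (Rabs (r - r0))) by apply Rabs_pos.
  apply sqrt_le_1_alt. rewrite pow2_abs. pose proof (pow2_ge_0 (x - x0)). lra.
Qed.

Section Trap.
Variables a b c d mu u xs : R.
Hypotheses (ha : 0 < a) (hb : 0 < b) (hc : 0 < c) (hd : 0 < d)
  (hmu : 0 < mu <= 1) (hu : (c + d) / 2 < u)
  (hxs : 1 / 2 < xs < 1) (heq : Fx a b c d mu u xs 1 = 0).
Variables X Y : R -> R.
Hypothesis Hsol : is_solution a b c d mu u X Y.

Definition fam (sig ka A ka2 : R) (i : nat) : R -> R :=
  match i with
  | O => fun s => (-1) * Y s + (- sig) * exp ((- ka) * s) + 1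
  | 1%nat => fun s => 1 * Y s + (- sig) * exp ((- ka) * s) + (-1)
  | 2%nat => fun s => 1 * X s + (- A) * exp ((- ka2) * s) + (- xs)
  | _ => fun s => (-1) * X s + (- A) * exp ((- ka2) * s) + xs
  end.

Definition fam' (sig ka A ka2 : R) (i : nat) : R -> R :=
  match i with
  | O => fun s => (-1) * Fr (X s) (Y s) + (- sig) * ((- ka) * exp ((- ka) * s))
  | 1%nat => fun s => 1 * Fr (X s) (Y s) + (- sig) * ((- ka) * exp ((- ka) * s))
  | 2%nat => fun s => 1 * Fx a b c d mu u (X s) (Y s) + (- A) * ((- ka2) * exp ((- ka2) * s))
  | _ => fun s => (-1) * Fx a b c d mu u (X s) (Y s) + (- A) * ((- ka2) * exp ((- ka2) * s))
  end.

Lemma trap rho sig A :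
  0 < rho -> 1/2 < xs - rho -> xs + rho < 1 ->
  0 < sig <= 1/2 -> 0 < A <= rho ->
  (Rabs (- c + d - a + b) + (d + b)) * sig <
     (2 * (u - (c + d)/2) * (1/4 - (xs + rho - 1/2)^2)) / 2 * A ->
  Rabs (1 - Y 0) < sig -> Rabs (X 0 - xs) < A ->
  forall t, 0 <= t ->
    Rabs (1 - Y t) <= sig * exp (- ((2 * (xs - rho) - 1) / 4) * t) /\
    Rabs (X t - xs) <= A * exp (- (Rmin (2 * (u - (c + d)/2) * (1/4 - (xs + rho - 1/2)^2))
                                         ((2 * (xs - rho) - 1) / 4) / 2) * t).
Proof.
  intros hr hlo hhi hsig hA hK hY0 hX0.
  set (al := 2 * (u - (c + d)/2) * (1/4 - (xs + rho - 1/2)^2)) in *.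
  set (ka := (2 * (xs - rho) - 1) / 4) in *.
  set (ka2 := Rmin al ka / 2).
  set (K := Rabs (- c + d - a + b) + (d + b)) in *.
  assert (hal : 0 < al).
  { unfold al. apply Rmult_lt_0_compat. lra. nra. }
  assert (hka : 0 < ka) by (unfold ka; lra).
  assert (hka2 : 0 < ka2) by (unfold ka2; pose proof (Rmin_glb_lt _ _ _ hal hka); lra).
  assert (hka2a : ka2 <= al / 2) by (unfold ka2; pose proof (Rmin_l al ka); lra).
  assert (hka2k : ka2 <= ka) by (unfold ka2; pose proof (Rmin_r al ka); lra).
  destruct Hsol as [Hder [HX0 HY0]].
  assert (Hmain : forall t, 0 <= t -> forall i, (i < 4)%nat -> fam sig ka A ka2 i t <= 0).
  { apply cont_ind_fam with (f' := fam' sig ka A ka2).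
    - intros i Hi. apply rce_of_filterlim in HX0. apply rce_of_filterlim in HY0.
      destruct i as [|[|[|[|i]]]]; simpl; try lia; apply rce_lin; auto; apply rce_exp.
    - intros i s Hi Hs. destruct (Hder s Hs) as [H1 H2].
      destruct i as [|[|[|[|i]]]]; simpl; try lia; apply deriv_lin; auto.
    - intros i Hi.
      apply Rabs_def2 in hY0. apply Rabs_def2 in hX0.
      destruct i as [|[|[|[|i]]]]; simpl; try lia; rewrite !Rmult_0_r, exp_0; lra.
    - intros i t Hi Ht Hall Hz.
      pose proof (Hall 0%nat ltac:(lia)) as F0. pose proof (Hall 1%nat ltac:(lia)) as F1.
      pose proof (Hall 2%nat ltac:(lia)) as F2. pose proof (Hall 3%nat ltac:(lia)) as F3.
      simpl in F0, F1, F2, F3.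
      set (E1 := exp (- ka * t)) in *. set (E2 := exp (- ka2 * t)) in *.
      assert (hE1 : 0 < E1) by apply exp_pos.
      assert (hE12 : E1 <= E2) by (apply exp_le_mono; nra).
      assert (hE2 : E2 <= 1) by (rewrite <- exp_0; apply exp_le_mono; nra).
      assert (hXb : xs - rho <= X t <= xs + rho) by nra.
      assert (hYb : 1 - sig <= Y t <= 1 + sig) by nra.
      assert (hprod : 2 * ka <= Y t * (2 * X t - 1)).
      { unfold ka. nra. }
      assert (HK0 : 0 <= K) by (unfold K; pose proof (Rabs_pos (- c + d - a + b)); lra).
      assert (Hpert : Rabs ((Y t - 1) * (X t * (1 - X t) * (X t * (- c + d - a + b) - (d + b))))
                      <= sig * E2 * K).
      { rewrite Rabs_mult. apply Rmult_le_compat. apply Rabs_pos. apply Rabs_pos.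
        apply Rabs_le. nra. apply pert_bound; lra. }
      apply Rabs_le_between in Hpert.
      assert (Hkey := key_x a b c d mu u xs hmu hu hxs heq (X t) ltac:(lra)).
      assert (Hal : al <= (1/4 - (X t - 1/2)^2) * (2 * (u - (c + d)/2))).
      { unfold al. assert (0 < u - (c + d)/2) by lra.
        assert ((X t - 1/2)^2 <= (xs + rho - 1/2)^2) by (apply pow_incr; lra).
        rewrite (Rmult_comm (2 * _)). apply Rmult_le_compat_r; lra. }
      destruct i as [|[|[|[|i]]]]; simpl; try lia; simpl in Hz; unfold Fr; fold E1 E2 in Hz |- *.
      + fold E1. assert (Hs : 1 - Y t = sig * E1) by lra. rewrite Hs.
        assert (0 < sig * E1) by (apply Rmult_lt_0_compat; lra).
        assert (Hm : (sig * E1) * (2 * ka) <= (sig * E1) * (Y t * (2 * X t - 1))) by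
          (apply Rmult_le_compat_l; lra).
        assert (Hm2 : (sig * E1) * ka < (sig * E1) * (2 * ka)) by
          (apply Rmult_lt_compat_l; lra).
        lra.
      + fold E1. assert (Hs : 1 - Y t = - (sig * E1)) by lra. rewrite Hs.
        assert (0 < sig * E1) by (apply Rmult_lt_0_compat; lra).
        assert (Hm : (sig * E1) * (2 * ka) <= (sig * E1) * (Y t * (2 * X t - 1))) by
          (apply Rmult_le_compat_l; lra).
        assert (Hm2 : (sig * E1) * ka < (sig * E1) * (2 * ka)) by
          (apply Rmult_lt_compat_l; lra).
        lra.
      + fold E2. rewrite Fx_pert.
        assert (He : X t - xs = A * E2) by lra.
        assert (0 < A * E2) by (apply Rmult_lt_0_compat; lra).
        assert (Hg : Fx a b c d mu u (X t) 1 <= - al * (A * E2)).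
        { rewrite He in Hkey. 
          assert (A * E2 * Fx a b c d mu u (X t) 1 <= A * E2 * (- al * (A * E2))).
          { eapply Rle_trans. apply Hkey. 
            assert (0 <= (A * E2)^2) by apply pow2_ge_0. nra. }
          apply (Rmult_le_reg_l (A * E2)); lra. }
        assert (ka2 * A * E2 <= al / 2 * A * E2).
        { apply Rmult_le_compat_r. lra. apply Rmult_le_compat_r; lra. }
        assert (K * sig * E2 < al / 2 * A * E2).
        { apply Rmult_lt_compat_r; lra. }
        nra.
      + fold E2. rewrite Fx_pert.
        assert (He : X t - xs = - (A * E2)) by lra.
        assert (0 < A * E2) by (apply Rmult_lt_0_compat; lra).
        assert (Hg : al * (A * E2) <= Fx a b c d mu u (X t) 1).
        { rewrite He in Hkey.
          assert (- (A * E2) * Fx a b c d mu u (X t) 1 <= - (A * E2) * (al * (A * E2))).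
          { eapply Rle_trans. apply Hkey.
            assert (0 <= (- (A * E2))^2) by apply pow2_ge_0. nra. }
          apply (Rmult_le_reg_l (A * E2)); lra. }
        assert (ka2 * A * E2 <= al / 2 * A * E2).
        { apply Rmult_le_compat_r. lra. apply Rmult_le_compat_r; lra. }
        assert (K * sig * E2 < al / 2 * A * E2).
        { apply Rmult_lt_compat_r; lra. }
        nra. }
  intros t Ht.
  pose proof (Hmain t Ht 0%nat ltac:(lia)) as F0. pose proof (Hmain t Ht 1%nat ltac:(lia)) as F1.
  pose proof (Hmain t Ht 2%nat ltac:(lia)) as F2. pose proof (Hmain t Ht 3%nat ltac:(lia)) as F3.
  simpl in F0, F1, F2, F3.
  split; apply Rabs_le; lra.
Qed.
End Trap.

Lemma exp_le_1 x : x <= 0 -> exp x <= 1.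
Proof. intros H. rewrite <- exp_0. apply exp_le_mono. exact H. Qed.

Lemma decay k A eps : 0 < k -> 0 <= A -> 0 < eps ->
  exists M, forall t, M < t -> A * exp (- k * t) < eps.
Proof.
  intros hk hA he. exists (Rmax 0 (A / (eps * k))).
  intros t Ht. pose proof (Rmax_l 0 (A / (eps * k))). pose proof (Rmax_r 0 (A / (eps * k))).
  assert (H1 : 1 + k * t <= exp (k * t)) by apply exp_ineq1_le.
  replace (- k * t) with (- (k * t)) by ring. rewrite exp_Ropp.
  assert (hE : 0 < exp (k * t)) by apply exp_pos.
  apply (Rmult_lt_reg_r (exp (k * t))); auto.
  rewrite Rmult_assoc, Rinv_l by lra. rewrite Rmult_1_r.
  assert (A / (eps * k) < t) by lra.
  assert (A < t * (eps * k)).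
  { apply (Rmult_lt_reg_r (/ (eps * k))). apply Rinv_0_lt_compat; nra.
    rewrite Rmult_assoc, Rinv_r by nra. rewrite Rmult_1_r. exact H2. }
  nra.
Qed.

Lemma lim_of_bound (F : R -> R) l k A : 0 < k -> 0 <= A ->
  (forall t, 0 <= t -> Rabs (F t - l) <= A * exp (- k * t)) ->
  filterlim F (Rbar_locally p_infty) (locally l).
Proof.
  intros hk hA H. apply filterlim_locally. intros eps.
  destruct (decay k A eps hk hA (cond_pos eps)) as [M HM].
  exists (Rmax 0 M). intros t Ht. apply ball_R.
  pose proof (Rmax_l 0 M). pose proof (Rmax_r 0 M).
  eapply Rle_lt_trans. apply H. lra. apply HM. lra.
Qed.

Section Stab.
Variables a b c d mu u xs : R.
Hypotheses (ha : 0 < a) (hb : 0 < b) (hc : 0 < c) (hd : 0 < d)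
  (hmu : 0 < mu <= 1) (hu : (c + d) / 2 < u)
  (hxs : 1 / 2 < xs < 1) (heq : Fx a b c d mu u xs 1 = 0).

Lemma stable_part : loc_asymp_stable a b c d mu u xs 1.
Proof.
  set (K := Rabs (- c + d - a + b) + (d + b)).
  assert (hK : 0 < K) by (unfold K; pose proof (Rabs_pos (- c + d - a + b)); lra).
  set (rho0 := Rmin ((xs - 1/2)/2) ((1 - xs)/2)).
  assert (hr0 : 0 < rho0) by (unfold rho0; apply Rmin_pos; lra).
  assert (hr1 : rho0 <= (xs - 1/2)/2) by apply Rmin_l.
  assert (hr2 : rho0 <= (1 - xs)/2) by apply Rmin_r.
  assert (Gen : forall rho, 0 < rho -> rho <= rho0 ->
    let al := 2 * (u - (c + d)/2) * (1/4 - (xs + rho - 1/2)^2) in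
    0 < al /\ forall sig, 0 < sig <= 1/2 -> sig <= al * rho / (4 * K) ->
      K * sig < al / 2 * rho).
  { intros rho h1 h2 al. assert (hal : 0 < al) by (unfold al; apply Rmult_lt_0_compat; [lra|nra]).
    split; auto. intros sig hs1 hs2.
    assert (K * sig <= K * (al * rho / (4 * K))) by (apply Rmult_le_compat_l; lra).
    replace (K * (al * rho / (4 * K))) with (al * rho / 4) in H by (field; lra).
    assert (0 < al * rho) by nra. lra. }
  split.
  - intros eps heps.
    set (rho := Rmin rho0 (eps / 4)).
    assert (hr : 0 < rho) by (unfold rho; apply Rmin_pos; lra).
    assert (hrr : rho <= rho0) by apply Rmin_l.
    assert (hre : rho <= eps / 4) by apply Rmin_r.
    destruct (Gen rho hr hrr) as [hal Hs].
    set (al := 2 * (u - (c + d)/2) * (1/4 - (xs + rho - 1/2)^2)) in *.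
    set (sig := Rmin (1/2) (Rmin (eps / 4) (al * rho / (4 * K)))).
    assert (hs0 : 0 < sig).
    { unfold sig. apply Rmin_pos. lra. apply Rmin_pos. lra.
      apply Rdiv_lt_0_compat; nra. }
    assert (hs1 : sig <= 1/2) by apply Rmin_l.
    assert (hs2 : sig <= eps / 4) by (eapply Rle_trans; [apply Rmin_r|apply Rmin_l]).
    assert (hs3 : sig <= al * rho / (4 * K)) by (eapply Rle_trans; [apply Rmin_r|apply Rmin_r]).
    exists (Rmin rho sig). split. apply Rmin_pos; lra.
    intros X Y Hsol HI Hd t Ht.
    assert (Hd1 := dist2_ge1 (X 0) (Y 0) xs 1). assert (Hd2 := dist2_ge2 (X 0) (Y 0) xs 1).
    pose proof (Rmin_l rho sig). pose proof (Rmin_r rho sig).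
    destruct (trap a b c d mu u xs hb hd hmu hu hxs heq X Y Hsol rho sig rho) with (t := t)
      as [T1 T2]; try lra.
    + apply Hs; lra.
    + rewrite Rabs_minus_sym. lra.
    + fold al in T1, T2. eapply Rle_lt_trans. apply dist2_le.
      assert (E1 : exp (- ((2 * (xs - rho) - 1) / 4) * t) <= 1).
      { apply exp_le_1. assert (hkk : 0 < (2 * (xs - rho) - 1) / 4) by lra. assert (0 <= (2 * (xs - rho) - 1) / 4 * t) by (apply Rmult_le_pos; lra). lra. }
      assert (E2 : exp (- (Rmin al ((2 * (xs - rho) - 1) / 4) / 2) * t) <= 1).
      { apply exp_le_1.
        assert (0 < Rmin al ((2 * (xs - rho) - 1) / 4)) by (apply Rmin_pos; lra).
        assert (0 <= (Rmin al ((2 * (xs - rho) - 1) / 4) / 2) * t) by (apply Rmult_le_pos; lra). lra. }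
      rewrite (Rabs_minus_sym (Y t)).
      assert (sig * exp (- ((2 * (xs - rho) - 1) / 4) * t) <= sig) by (pose proof (exp_pos (- ((2 * (xs - rho) - 1) / 4) * t)); nra).
      assert (rho * exp (- (Rmin al ((2 * (xs - rho) - 1) / 4) / 2) * t) <= rho) by (pose proof (exp_pos (- (Rmin al ((2 * (xs - rho) - 1) / 4) / 2) * t)); nra).
      lra.
  - set (rho := rho0) in *.
    destruct (Gen rho hr0 (Rle_refl _)) as [hal Hs].
    set (al := 2 * (u - (c + d)/2) * (1/4 - (xs + rho - 1/2)^2)) in *.
    set (sig := Rmin (1/2) (al * rho / (4 * K))).
    assert (hs0 : 0 < sig).
    { unfold sig. apply Rmin_pos. lra. apply Rdiv_lt_0_compat; [apply Rmult_lt_0_compat | ]; lra. }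
    assert (hs1 : sig <= 1/2) by apply Rmin_l.
    assert (hs3 : sig <= al * rho / (4 * K)) by apply Rmin_r.
    exists (Rmin rho sig). split. apply Rmin_pos; lra.
    intros X Y Hsol HI Hd.
    assert (Hd1 := dist2_ge1 (X 0) (Y 0) xs 1). assert (Hd2 := dist2_ge2 (X 0) (Y 0) xs 1).
    pose proof (Rmin_l rho sig). pose proof (Rmin_r rho sig).
    assert (hr : 0 < rho) by exact hr0.
    assert (Tr := trap a b c d mu u xs hb hd hmu hu hxs heq X Y Hsol rho sig rho).
    assert (hka : 0 < (2 * (xs - rho) - 1) / 4) by lra.
    assert (hka2 : 0 < Rmin al ((2 * (xs - rho) - 1) / 4) / 2)
      by (assert (0 < Rmin al ((2 * (xs - rho) - 1) / 4)) by (apply Rmin_pos; lra); lra).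
    assert (Hc1 : Rabs (1 - Y 0) < sig) by (rewrite Rabs_minus_sym; lra).
    assert (Hc2 : Rabs (X 0 - xs) < rho) by lra.
    assert (Hc3 : K * sig < al / 2 * rho) by (apply Hs; lra).
    split.
    + apply (lim_of_bound X xs _ rho hka2). lra.
      intros t Ht. apply (Tr ltac:(lra) ltac:(lra) ltac:(lra) ltac:(lra) ltac:(lra) Hc3 Hc1 Hc2 t Ht).
    + apply (lim_of_bound Y 1 _ sig hka). lra.
      intros t Ht. rewrite Rabs_minus_sym.
      apply (Tr ltac:(lra) ltac:(lra) ltac:(lra) ltac:(lra) ltac:(lra) Hc3 Hc1 Hc2 t Ht).
Qed.
End Stab.

Definition clip (x : R) : R := Rmax 0 (Rmin 1 x).
Definition lg (w : R) : R := / (1 + exp (- w)).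

Lemma clip_range x : 0 <= clip x <= 1.
Proof. unfold clip, Rmax, Rmin. repeat destruct Rle_dec; lra. Qed.

Lemma clip_id x : 0 <= x <= 1 -> clip x = x.
Proof. intros. unfold clip, Rmax, Rmin. repeat destruct Rle_dec; lra. Qed.

Lemma clip_lip x y : Rabs (clip x - clip y) <= Rabs (x - y).
Proof.
  unfold clip, Rmax, Rmin. repeat destruct Rle_dec;
  repeat match goal with |- context [Rabs ?z] =>
    destruct (Rcase_abs z); [rewrite (Rabs_left z) by lra | rewrite (Rabs_right z) by lra] end; lra.
Qed.

Lemma lg_range w : 0 < lg w < 1.
Proof.
  unfold lg. pose proof (exp_pos (- w)). split.
  apply Rinv_0_lt_compat; lra.
  rewrite <- Rinv_1. apply Rinv_lt_contravar; lra.
Qed.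

Lemma lg_derive w : is_derive lg w (lg w * (1 - lg w)).
Proof.
  unfold lg. pose proof (exp_pos (- w)).
  auto_derive. lra. field_simplify; try lra.
Qed.

Lemma lg_lip w w' : Rabs (lg w - lg w') <= Rabs (w - w').
Proof.
  destruct (MVT_abs lg (fun z => lg z * (1 - lg z)) w' w) as [z [Hz _]].
  { intros z _. apply is_derive_Reals. apply lg_derive. }
  rewrite Hz. pose proof (lg_range z).
  rewrite (Rabs_right (lg z * (1 - lg z))) by nra.
  pose proof (Rabs_pos (w - w')). nra.
Qed.

Lemma lg_logit r : 0 < r < 1 -> lg (ln (r / (1 - r))) = r.
Proof.
  intros hr. unfold lg. rewrite exp_Ropp, exp_ln.
  field. split; lra.  apply Rdiv_lt_0_compat; lra.
Qed.

Lemma abs4 p1 p2 p3 p4 : Rabs (p1 + p2 + p3 + p4) <= Rabs p1 + Rabs p2 + Rabs p3 + Rabs p4.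
Proof.
  eapply Rle_trans. apply Rabs_triang. eapply Rplus_le_compat_r.
  eapply Rle_trans. apply Rabs_triang. eapply Rplus_le_compat_r. apply Rabs_triang.
Qed.

Lemma abs_mul_le p q P Q : Rabs p <= P -> Rabs q <= Q -> Rabs (p * q) <= P * Q.
Proof.
  intros h1 h2. rewrite Rabs_mult. apply Rmult_le_compat; auto; apply Rabs_pos.
Qed.

Section Lip.
Variables a b c d mu u : R.
Hypotheses (hb : 0 < b) (hd : 0 < d) (hmu : 0 < mu).

Definition L1 := 5 * (Rabs (- c + d - a + b) + Rabs (a - b)) + 3 * (b + Rabs u + (d + b)) + 2 * mu.
Definition L2 := Rabs (- c + d - a + b) + (d + b).

Lemma L1_pos : 0 < L1.
Proof. unfold L1. pose proof (Rabs_pos (- c + d - a + b)). pose proof (Rabs_pos (a - b)).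
  pose proof (Rabs_pos u). lra. Qed.
Lemma L2_pos : 0 < L2.
Proof. unfold L2. pose proof (Rabs_pos (- c + d - a + b)). lra. Qed.

Lemma Fx_lip_x x x' r : 0 <= x <= 1 -> 0 <= x' <= 1 -> 0 <= r <= 1 ->
  Rabs (Fx a b c d mu u x r - Fx a b c d mu u x' r) <= L1 * Rabs (x - x').
Proof.
  intros hx hx' hr.
  set (A := - c + d - a + b). set (B := a - b). set (C := d + b).
  set (E := r * A + B). set (F := b + u - r * C).
  set (S := x^2 + x * x' + x'^2). set (T := x + x').
  assert (Hid : Fx a b c d mu u x r - Fx a b c d mu u x' r =
     (x - x') * (- (E * S) + (E - F) * T + F + - (2 * mu))).
  { unfold Fx, E, F, S, T, A, B, C. field. }
  rewrite Hid, Rabs_mult, Rmult_comm. apply Rmult_le_compat_r. apply Rabs_pos.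
  assert (hE : Rabs E <= Rabs A + Rabs B).
  { unfold E. eapply Rle_trans. apply Rabs_triang. apply Rplus_le_compat_r.
    rewrite Rabs_mult, Rabs_right by lra. pose proof (Rabs_pos A). nra. }
  assert (hF : Rabs F <= b + Rabs u + C).
  { unfold F. unfold Rminus. eapply Rle_trans. apply Rabs_triang.
    rewrite Rabs_Ropp, Rabs_mult, (Rabs_right r), (Rabs_right C) by (unfold C; lra).
    eapply Rle_trans. apply Rplus_le_compat_r. apply Rabs_triang.
    rewrite (Rabs_right b) by lra. unfold C. nra. }
  assert (hS : Rabs S <= 3) by (unfold S; rewrite Rabs_right; nra).
  assert (hT : Rabs T <= 2) by (unfold T; rewrite Rabs_right; nra).
  assert (hEF : Rabs (E - F) <= Rabs A + Rabs B + (b + Rabs u + C)).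
  { unfold Rminus. eapply Rle_trans. apply Rabs_triang. rewrite Rabs_Ropp. lra. }
  eapply Rle_trans. apply abs4. rewrite !Rabs_Ropp.
  pose proof (abs_mul_le _ _ _ _ hE hS). pose proof (abs_mul_le _ _ _ _ hEF hT).
  rewrite (Rabs_mult 2 mu), (Rabs_right 2), (Rabs_right mu) by lra.
  unfold L1. fold A B. fold C. lra.
Qed.

Lemma Fx_lip_r x r r' : 0 <= x <= 1 ->
  Rabs (Fx a b c d mu u x r - Fx a b c d mu u x r') <= L2 * Rabs (r - r').
Proof.
  intros hx.
  assert (Hid : Fx a b c d mu u x r - Fx a b c d mu u x r' =
     (r - r') * (x * (1 - x) * (x * (- c + d - a + b) - (d + b)))).
  { unfold Fx. field. }
  rewrite Hid, Rabs_mult, Rmult_comm. apply Rmult_le_compat_r. apply Rabs_pos.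
  apply pert_bound; auto.
Qed.

Definition Gx (x w : R) : R := Fx a b c d mu u (clip x) (lg w).
Definition Gw (x w : R) : R := 2 * clip x - 1.
Definition LL := L1 + L2 + 2.
Definition BB := L1 + mu + 1.

Lemma LL_pos : 0 < LL.
Proof. unfold LL. pose proof L1_pos. pose proof L2_pos. lra. Qed.

Lemma Gx_lip x w x' w' : Rabs (Gx x w - Gx x' w') <= LL * (Rabs (x - x') + Rabs (w - w')).
Proof.
  unfold Gx. pose proof (clip_range x). pose proof (clip_range x').
  pose proof (lg_range w). pose proof (lg_range w').
  replace (Fx a b c d mu u (clip x) (lg w) - Fx a b c d mu u (clip x') (lg w'))
    with ((Fx a b c d mu u (clip x) (lg w) - Fx a b c d mu u (clip x') (lg w))
          + (Fx a b c d mu u (clip x') (lg w) - Fx a b c d mu u (clip x') (lg w'))) by ring.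
  eapply Rle_trans. apply Rabs_triang.
  pose proof (Fx_lip_x (clip x) (clip x') (lg w) ltac:(lra) ltac:(lra) ltac:(lra)).
  pose proof (Fx_lip_r (clip x') (lg w) (lg w') ltac:(lra)).
  pose proof (clip_lip x x'). pose proof (lg_lip w w').
  pose proof L1_pos. pose proof L2_pos.
  pose proof (Rabs_pos (x - x')). pose proof (Rabs_pos (w - w')).
  unfold LL. nra.
Qed.

Lemma Gw_lip x w x' w' : Rabs (Gw x w - Gw x' w') <= LL * (Rabs (x - x') + Rabs (w - w')).
Proof.
  unfold Gw. replace (2 * clip x - 1 - (2 * clip x' - 1)) with (2 * (clip x - clip x')) by ring.
  rewrite Rabs_mult, Rabs_right by lra. pose proof (clip_lip x x').
  pose proof L1_pos. pose proof L2_pos.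
  pose proof (Rabs_pos (x - x')). pose proof (Rabs_pos (w - w')).
  unfold LL. nra.
Qed.

Lemma Gx_bound x w : Rabs (Gx x w) <= BB.
Proof.
  unfold Gx. pose proof (clip_range x). pose proof (lg_range w).
  pose proof (Fx_lip_x (clip x) 0 (lg w) ltac:(lra) ltac:(lra) ltac:(lra)).
  assert (Fx a b c d mu u 0 (lg w) = mu) by (unfold Fx; field).
  rewrite H2 in H1. rewrite Rminus_0_r, (Rabs_right (clip x)) in H1 by lra.
  pose proof L1_pos.
  assert (Rabs (Fx a b c d mu u (clip x) (lg w) - mu) <= L1) by nra.
  pose proof (Rabs_le_between _ _ H4). apply Rabs_le. unfold BB. lra.
Qed.

Lemma Gw_bound x w : Rabs (Gw x w) <= BB.
Proof.
  unfold Gw. pose proof (clip_range x). apply Rabs_le. unfold BB. pose proof L1_pos. lra.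
Qed.
End Lip.

Lemma lip_cont (f : R -> R) M t : 0 <= M ->
  (forall s s', Rabs (f s - f s') <= M * Rabs (s - s')) -> continuous f t.
Proof.
  intros hM H. apply filterlim_locally. intros eps.
  assert (hp : 0 < eps / (M + 1)) by (apply Rdiv_lt_0_compat; [apply cond_pos|lra]).
  exists (mkposreal _ hp). intros s Hs. change (Rabs (f s - f t) < eps). change (Rabs (s - t) < eps / (M + 1)) in Hs.
  eapply Rle_lt_trans. apply H.
  assert (M * Rabs (s - t) <= M * (eps / (M + 1))) by (apply Rmult_le_compat_l; lra).
  assert (M * (eps / (M + 1)) < eps).
  { apply (Rmult_lt_reg_r (M + 1)). lra. field_simplify; try lra.
    pose proof (cond_pos eps). nra. }
  lra.
Qed.

Lemma ex_RInt_cont (f : R -> R) a b : (forall s, continuous f s) -> ex_RInt f a b.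
Proof. intros H. apply (ex_RInt_continuous (V:=R_CompleteNormedModule)). intros; apply H. Qed.

Lemma RInt_diff_bound (f : R -> R) B t t' : (forall s, continuous f s) ->
  (forall s, Rabs (f s) <= B) -> Rabs (RInt f 0 t - RInt f 0 t') <= B * Rabs (t - t').
Proof.
  intros Hc Hb.
  assert (E : RInt f 0 t - RInt f 0 t' = RInt f t' t).
  { rewrite <- (RInt_Chasles f 0 t' t) by (apply ex_RInt_cont; auto).
    unfold plus; simpl. ring. }
  rewrite E. rewrite Rmult_comm.
  assert (HI := RInt_correct (V:=R_CompleteNormedModule) f t' t (ex_RInt_cont f t' t Hc)).
  exact (norm_RInt_le_const_abs (V:=R_NormedModule) f t' t (RInt f t' t) B (fun x _ => Hb x) HI).
Qed.

Lemma RInt_exp lam t : 0 < lam -> RInt (fun s => exp (lam * s)) 0 t = (exp (lam * t) - 1) / lam.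
Proof.
  intros hl. apply is_RInt_unique.
  replace ((exp (lam * t) - 1) / lam) with (minus (exp (lam * t) / lam) (exp (lam * 0) / lam)).
  2: { unfold minus, plus, opp; simpl. rewrite Rmult_0_r, exp_0. field. lra. }
  apply (is_RInt_derive (fun s => exp (lam * s) / lam)).
  - intros x _. auto_derive. auto. field. lra.
  - intros x _. apply (ex_derive_continuous (K:=R_AbsRing) (V:=R_NormedModule)). auto_derive. auto.
Qed.

Lemma int_exp_bound (g : R -> R) C lam t : 0 <= t -> 0 < lam ->
  (forall s, continuous g s) ->
  (forall s, 0 <= s <= t -> Rabs (g s) <= C * exp (lam * s)) ->
  Rabs (RInt g 0 t) <= C * exp (lam * t) / lam.
Proof.
  intros ht hl Hc Hb.
  assert (Hex : ex_RInt (fun s => C * exp (lam * s)) 0 t).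
  { apply ex_RInt_cont. intros s. apply (ex_derive_continuous (K:=R_AbsRing) (V:=R_NormedModule)). auto_derive. auto. }
  assert (Hex' : ex_RInt (fun s => - (C * exp (lam * s))) 0 t).
  { apply ex_RInt_cont. intros s. apply (ex_derive_continuous (K:=R_AbsRing) (V:=R_NormedModule)). auto_derive. auto. }
  assert (HI : RInt (fun s => C * exp (lam * s)) 0 t = C * ((exp (lam * t) - 1) / lam)).
  { rewrite <- RInt_exp by auto. apply (RInt_scal (fun s => exp (lam * s)) 0 t C).
    apply ex_RInt_cont. intros s. apply (ex_derive_continuous (K:=R_AbsRing) (V:=R_NormedModule)). auto_derive. auto. }
  assert (HI' : RInt (fun s => - (C * exp (lam * s))) 0 t = - (C * ((exp (lam * t) - 1) / lam))).
  { rewrite <- HI. apply (RInt_opp (fun s => C * exp (lam * s))). auto. }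
  assert (H1 : RInt g 0 t <= RInt (fun s => C * exp (lam * s)) 0 t).
  { apply RInt_le; auto. apply ex_RInt_cont; auto. intros x Hx.
    pose proof (Hb x ltac:(lra)). pose proof (Rle_abs (g x)). lra. }
  assert (H2 : RInt (fun s => - (C * exp (lam * s))) 0 t <= RInt g 0 t).
  { apply RInt_le; auto. apply ex_RInt_cont; auto. intros x Hx.
    pose proof (Hb x ltac:(lra)). pose proof (Rle_abs (- g x)). rewrite Rabs_Ropp in H0. lra. }
  rewrite HI in H1. rewrite HI' in H2.
  assert (0 < exp (lam * t)) by apply exp_pos.
  assert (0 <= C).
  { pose proof (Hb 0 ltac:(lra)). rewrite Rmult_0_r, exp_0 in H0. pose proof (Rabs_pos (g 0)). lra. }
  assert (C * ((exp (lam * t) - 1) / lam) <= C * exp (lam * t) / lam).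
  { unfold Rdiv. rewrite <- Rmult_assoc. apply Rmult_le_compat_r. left; apply Rinv_0_lt_compat; auto. nra. }
  apply Rabs_le. lra.
Qed.

Lemma lim_bound2 (u v : nat -> R) (l l' C : R) :
  is_lim_seq u l -> is_lim_seq v l' -> (forall m, Rabs (u m - v m) <= C) -> Rabs (l - l') <= C.
Proof.
  intros Hu Hv H.
  destruct (Rle_or_lt (Rabs (l - l')) C) as [|Hlt]; auto. exfalso.
  apply is_lim_seq_spec in Hu. apply is_lim_seq_spec in Hv. unfold is_lim_seq' in Hu, Hv.
  assert (he : 0 < (Rabs (l - l') - C) / 2) by lra.
  destruct (Hu (mkposreal _ he)) as [N1 H1]. destruct (Hv (mkposreal _ he)) as [N2 H2].
  specialize (H1 (N1 + N2)%nat ltac:(lia)). specialize (H2 (N1 + N2)%nat ltac:(lia)).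
  simpl in H1, H2. specialize (H (N1 + N2)%nat).
  assert (Rabs (l - l') <= Rabs (u (N1 + N2)%nat - l) + Rabs (u (N1 + N2)%nat - v (N1 + N2)%nat) + Rabs (v (N1 + N2)%nat - l')).
  { replace (l - l') with (- (u (N1 + N2)%nat - l) + (u (N1 + N2)%nat - v (N1 + N2)%nat) + (v (N1 + N2)%nat - l')) by ring.
    eapply Rle_trans. apply Rabs_triang. rewrite <- (Rabs_Ropp (u _ - l)).
    apply Rplus_le_compat_r. apply Rabs_triang. }
  lra.
Qed.

Lemma lim_bound (u : nat -> R) (l v C : R) n :
  is_lim_seq u l -> (forall m, (n <= m)%nat -> Rabs (u m - v) <= C) -> Rabs (l - v) <= C.
Proof.
  intros Hu H.
  apply (lim_bound2 (fun m => u (n + m)%nat) (fun _ => v)).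
  - apply (is_lim_seq_incr_n u n l) in Hu. eapply is_lim_seq_ext; [|exact Hu]. intros m; simpl. f_equal; lia.
  - apply is_lim_seq_const.
  - intros m. apply H. lia.
Qed.

Lemma small_zero z C : 0 <= C -> (forall n, Rabs z <= C * (/2)^n) -> z = 0.
Proof.
  intros hC H. destruct (Req_dec z 0) as [|Hz]; auto. exfalso.
  assert (hz : 0 < Rabs z) by (apply Rabs_pos_lt; auto).
  destruct (pow_lt_1_zero (/2) ltac:(rewrite Rabs_right; lra) (Rabs z / (C + 1))) as [N HN].
  apply Rdiv_lt_0_compat; lra.
  specialize (HN N (le_n N)). specialize (H N).
  rewrite Rabs_right in HN by (apply Rle_ge, pow_le; lra).
  assert (C * (/ 2) ^ N <= (C + 1) * (/2)^N) by (pose proof (pow_le (/2) N ltac:(lra)); nra).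
  assert ((C + 1) * (/ 2) ^ N < (C + 1) * (Rabs z / (C + 1))) by (apply Rmult_lt_compat_l; lra).
  replace ((C + 1) * (Rabs z / (C + 1))) with (Rabs z) in H1 by (field; lra).
  lra.
Qed.

Lemma Rmax_lip t t' : Rabs (Rmax 0 t - Rmax 0 t') <= Rabs (t - t').
Proof.
  unfold Rmax. repeat destruct Rle_dec;
  repeat match goal with |- context [Rabs ?z] =>
    destruct (Rcase_abs z); [rewrite (Rabs_left z) by lra | rewrite (Rabs_right z) by lra] end; lra.
Qed.

Section Picard.
Variables a b c d mu u x0 w0 : R.
Hypotheses (hb : 0 < b) (hd : 0 < d) (hmu : 0 < mu).

Local Notation G1 := (Gx a b c d mu u).
Local Notation L := (LL a b c d mu u).
Local Notation B := (BB a b c d mu u).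
Local Notation lam := (4 * LL a b c d mu u).
Local Notation M0 := (2 * BB a b c d mu u / (4 * LL a b c d mu u)).

Lemma hL : 0 < L. Proof. apply LL_pos; auto. Qed.
Lemma hB : 0 < B.
Proof. unfold BB. pose proof (L1_pos a b c d mu u hb hd hmu). lra. Qed.
Lemma hlam : 0 < lam. Proof. pose proof hL. lra. Qed.
Lemma hM0 : 0 < M0. Proof. pose proof hB; pose proof hlam. apply Rdiv_lt_0_compat; lra. Qed.

Fixpoint pic (n : nat) : (R -> R) * (R -> R) :=
  match n with
  | O => (fun _ => x0, fun _ => w0)
  | S n => let p := pic n in
      (fun t => x0 + RInt (fun s => G1 (fst p s) (snd p s)) 0 t,
       fun t => w0 + RInt (fun s => Gw (fst p s) (snd p s)) 0 t)
  end.

Definition PX n := fst (pic n).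
Definition PW n := snd (pic n).
Definition hx n s := G1 (PX n s) (PW n s).
Definition hw n s := Gw (PX n s) (PW n s).

Lemma PX_S n t : PX (S n) t = x0 + RInt (hx n) 0 t.
Proof. reflexivity. Qed.
Lemma PW_S n t : PW (S n) t = w0 + RInt (hw n) 0 t.
Proof. reflexivity. Qed.

Lemma comp_lip (f g : R -> R) : 
  (forall s s', Rabs (f s - f s') <= B * Rabs (s - s')) ->
  (forall s s', Rabs (g s - g s') <= B * Rabs (s - s')) ->
  (forall s, continuous (fun s => G1 (f s) (g s)) s) /\ (forall s, continuous (fun s => Gw (f s) (g s)) s).
Proof.
  intros Hf Hg. pose proof hL. pose proof hB. split; intros s.
  - apply (lip_cont _ (L * (2 * B))). nra.
    intros s1 s2. eapply Rle_trans. apply Gx_lip; auto.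
    specialize (Hf s1 s2). specialize (Hg s1 s2). pose proof (Rabs_pos (s1 - s2)). nra.
  - apply (lip_cont _ (L * (2 * B))). nra.
    intros s1 s2. eapply Rle_trans. apply (Gw_lip a b c d mu u); auto.
    specialize (Hf s1 s2). specialize (Hg s1 s2). pose proof (Rabs_pos (s1 - s2)). nra.
Qed.

Lemma pic_lip n : (forall s s', Rabs (PX n s - PX n s') <= B * Rabs (s - s')) /\
                  (forall s s', Rabs (PW n s - PW n s') <= B * Rabs (s - s')).
Proof.
  pose proof hB. induction n as [|n [IH1 IH2]].
  - split; intros s s'; unfold PX, PW; simpl; rewrite Rminus_eq_0, Rabs_R0;
    pose proof (Rabs_pos (s - s')); nra.
  - destruct (comp_lip _ _ IH1 IH2) as [C1 C2].
    split; intros s s'.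
    + rewrite !PX_S. replace (x0 + RInt (hx n) 0 s - (x0 + RInt (hx n) 0 s')) with
        (RInt (hx n) 0 s - RInt (hx n) 0 s') by ring.
      apply RInt_diff_bound. exact C1. intros; apply Gx_bound; auto.
    + rewrite !PW_S. replace (w0 + RInt (hw n) 0 s - (w0 + RInt (hw n) 0 s')) with
        (RInt (hw n) 0 s - RInt (hw n) 0 s') by ring.
      apply RInt_diff_bound. exact C2. intros; apply Gw_bound; auto.
Qed.

Lemma h_cont n : (forall s, continuous (hx n) s) /\ (forall s, continuous (hw n) s).
Proof. destruct (pic_lip n) as [H1 H2]. apply (comp_lip _ _ H1 H2). Qed.

Lemma D_bound n t : 0 <= t ->
  Rabs (PX (S n) t - PX n t) + Rabs (PW (S n) t - PW n t) <= M0 * (/2)^n * exp (lam * t).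
Proof.
  pose proof hL. pose proof hB. pose proof hlam. pose proof hM0.
  revert t. induction n as [|n IH]; intros t ht.
  - rewrite PX_S, PW_S. change (PX 0 t) with x0. change (PW 0 t) with w0.
    unfold hx, hw. change (PX 0) with (fun _ : R => x0). change (PW 0) with (fun _ : R => w0). cbv beta.
    rewrite !RInt_const. unfold scal; simpl; unfold mult; simpl.
    replace (x0 + (t - 0) * G1 x0 w0 - x0) with (t * G1 x0 w0) by ring.
    replace (w0 + (t - 0) * Gw x0 w0 - w0) with (t * Gw x0 w0) by ring.
    rewrite !Rabs_mult, Rabs_right by lra.
    pose proof (Gx_bound a b c d mu u hb hd hmu x0 w0). pose proof (Gw_bound a b c d mu u hb hd hmu x0 w0).
    assert (lam * t <= exp (lam * t)) by (pose proof (exp_ineq1_le (lam * t)); lra).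
    assert (E : M0 * 1 * exp (lam * t) = 2 * B * (exp (lam * t) / lam)) by (field; lra).
    rewrite E.
    assert (t <= exp (lam * t) / lam).
    { apply (Rmult_le_reg_l lam); auto. field_simplify; lra. }
    nra.
  - destruct (h_cont (S n)) as [C1 C2]. destruct (h_cont n) as [C3 C4].
    rewrite (PX_S (S n)), (PX_S n), (PW_S (S n)), (PW_S n).
    replace (x0 + RInt (hx (S n)) 0 t - (x0 + RInt (hx n) 0 t)) with
      (RInt (hx (S n)) 0 t - RInt (hx n) 0 t) by ring.
    replace (w0 + RInt (hw (S n)) 0 t - (w0 + RInt (hw n) 0 t)) with
      (RInt (hw (S n)) 0 t - RInt (hw n) 0 t) by ring.
    assert (E1 : RInt (hx (S n)) 0 t - RInt (hx n) 0 t = RInt (fun s => hx (S n) s - hx n s) 0 t).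
    { symmetry. apply (RInt_minus (V:=R_CompleteNormedModule)); apply ex_RInt_cont; auto. }
    assert (E2 : RInt (hw (S n)) 0 t - RInt (hw n) 0 t = RInt (fun s => hw (S n) s - hw n s) 0 t).
    { symmetry. apply (RInt_minus (V:=R_CompleteNormedModule)); apply ex_RInt_cont; auto. }
    rewrite E1, E2.
    assert (B1 : Rabs (RInt (fun s => hx (S n) s - hx n s) 0 t) <= L * (M0 * (/2)^n) * exp (lam * t) / lam).
    { apply int_exp_bound; auto.
      - intros s. apply (continuous_minus (V:=R_NormedModule)); auto.
      - intros s hs. unfold hx. eapply Rle_trans. apply Gx_lip; auto.
        rewrite Rmult_assoc. apply Rmult_le_compat_l. lra. apply IH. lra. }
    assert (B2 : Rabs (RInt (fun s => hw (S n) s - hw n s) 0 t) <= L * (M0 * (/2)^n) * exp (lam * t) / lam).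
    { apply int_exp_bound; auto.
      - intros s. apply (continuous_minus (V:=R_NormedModule)); auto.
      - intros s hs. unfold hw. eapply Rle_trans. apply (Gw_lip a b c d mu u); auto.
        rewrite Rmult_assoc. apply Rmult_le_compat_l. lra. apply IH. lra. }
    assert (E : 2 * (L * (M0 * (/ 2) ^ n) * exp (lam * t) / lam) = M0 * (/ 2) ^ S n * exp (lam * t)).
    { simpl. field. lra. }
    lra.
Qed.

Lemma cauchy_bound n k t : 0 <= t ->
  Rabs (PX (n + k) t - PX n t) + Rabs (PW (n + k) t - PW n t)
    <= 2 * M0 * exp (lam * t) * ((/2)^n - (/2)^(n + k)).
Proof.
  intros ht. induction k as [|k IH].
  - rewrite Nat.add_0_r, !Rminus_eq_0, !Rabs_R0. lra.
  - pose proof (D_bound (n + k) t ht).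
    replace (n + S k)%nat with (S (n + k)) by lia.
    assert (Rabs (PX (S (n + k)) t - PX n t) <= Rabs (PX (S (n + k)) t - PX (n + k) t) + Rabs (PX (n + k) t - PX n t)).
    { replace (PX (S (n + k)) t - PX n t) with ((PX (S (n + k)) t - PX (n + k) t) + (PX (n + k) t - PX n t)) by ring.
      apply Rabs_triang. }
    assert (Rabs (PW (S (n + k)) t - PW n t) <= Rabs (PW (S (n + k)) t - PW (n + k) t) + Rabs (PW (n + k) t - PW n t)).
    { replace (PW (S (n + k)) t - PW n t) with ((PW (S (n + k)) t - PW (n + k) t) + (PW (n + k) t - PW n t)) by ring.
      apply Rabs_triang. }
    assert (E : 2 * M0 * exp (lam * t) * ((/ 2) ^ n - (/ 2) ^ S (n + k)) =
      M0 * (/ 2) ^ (n + k) * exp (lam * t) + 2 * M0 * exp (lam * t) * ((/ 2) ^ n - (/ 2) ^ (n + k))).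
    { simpl. field; pose proof hL; lra. }
    rewrite E. lra.
Qed.

Lemma cauchy_bound' n m t : 0 <= t -> (n <= m)%nat ->
  Rabs (PX m t - PX n t) <= 2 * M0 * exp (lam * t) * (/2)^n /\
  Rabs (PW m t - PW n t) <= 2 * M0 * exp (lam * t) * (/2)^n.
Proof.
  intros ht hnm. replace m with (n + (m - n))%nat by lia.
  pose proof (cauchy_bound n (m - n) t ht).
  pose proof (Rabs_pos (PX (n + (m - n)) t - PX n t)). pose proof (Rabs_pos (PW (n + (m - n)) t - PW n t)).
  assert (0 <= 2 * M0 * exp (lam * t) * (/2)^(n + (m - n))).
  { pose proof hM0. pose proof (exp_pos (lam * t)). pose proof (pow_le (/2) (n + (m - n)) ltac:(lra)).
    apply Rmult_le_pos; [|auto]. nra. }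
  split; nra.
Qed.
End Picard.

Lemma cont_at_right (f : R -> R) t : continuous f t -> filterlim f (at_right t) (locally (f t)).
Proof.
  intros H. apply (filterlim_filter_le_1 (F := locally t)); auto.
  intros P HP. unfold at_right, within. apply (filter_imp P); auto.
Qed.


Lemma derive_const_plus (f : R -> R) c t l : is_derive f t l -> is_derive (fun s => c + f s) t l.
Proof.
  intros H. assert (H2 := is_derive_plus (K:=R_AbsRing) (V:=R_NormedModule) (fun _ => c) f t zero l (is_derive_const c t) H).
  replace l with (plus zero l). exact H2. apply plus_zero_l.
Qed.

Section Lim.
Variables a b c d mu u x0 w0 : R.
Hypotheses (hb : 0 < b) (hd : 0 < d) (hmu : 0 < mu).

Local Notation G1 := (Gx a b c d mu u).
Local Notation L := (LL a b c d mu u).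
Local Notation B := (BB a b c d mu u).
Local Notation lam := (4 * LL a b c d mu u).
Local Notation M0 := (2 * BB a b c d mu u / (4 * LL a b c d mu u)).
Local Notation PXn := (PX a b c d mu u x0 w0).
Local Notation PWn := (PW a b c d mu u x0 w0).

Definition XL t := real (Lim_seq (fun n => PXn n (Rmax 0 t))).
Definition WL t := real (Lim_seq (fun n => PWn n (Rmax 0 t))).

Lemma cv_seq t : ex_finite_lim_seq (fun n => PXn n (Rmax 0 t)) /\ ex_finite_lim_seq (fun n => PWn n (Rmax 0 t)).
Proof.
  set (tt := Rmax 0 t). assert (htt : 0 <= tt) by apply Rmax_l.
  set (Kt := 2 * M0 * exp (lam * tt)).
  assert (hK : 0 <= Kt).
  { unfold Kt. pose proof (hM0 a b c d mu u hb hd hmu). pose proof (exp_pos (lam * tt)). nra. }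
  assert (Hc : forall eps : posreal, exists N, forall n m, (N <= n)%nat -> (N <= m)%nat ->
     Rabs (PXn n tt - PXn m tt) < eps /\ Rabs (PWn n tt - PWn m tt) < eps).
  { intros eps. destruct (pow_lt_1_zero (/2) ltac:(rewrite Rabs_right; lra) (eps / (Kt + 1))) as [N HN].
    apply Rdiv_lt_0_compat; [apply cond_pos|lra].
    exists N. intros n m hn hm.
    assert (Hb : forall p q, (N <= p)%nat -> (p <= q)%nat ->
       Rabs (PXn q tt - PXn p tt) < eps /\ Rabs (PWn q tt - PWn p tt) < eps).
    { intros p q hp hq. destruct (cauchy_bound' a b c d mu u x0 w0 hb hd hmu p q tt htt hq) as [H1 H2].
      specialize (HN p hp). rewrite Rabs_right in HN by (apply Rle_ge, pow_le; lra).
      fold Kt in H1, H2.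
      assert (Kt * (/ 2) ^ p <= (Kt + 1) * (/2)^p) by (pose proof (pow_le (/2) p ltac:(lra)); nra).
      assert ((Kt + 1) * (/ 2) ^ p < (Kt + 1) * (eps / (Kt + 1))) by (apply Rmult_lt_compat_l; lra).
      replace ((Kt + 1) * (eps / (Kt + 1))) with (pos eps) in H0 by (field; lra).
      split; lra. }
    destruct (Nat.le_gt_cases n m) as [hnm|hnm].
    - rewrite (Rabs_minus_sym (PXn n tt)), (Rabs_minus_sym (PWn n tt)). apply Hb; auto.
    - apply Hb; auto. lia. }
  split; apply ex_lim_seq_cauchy_corr; intros eps; destruct (Hc eps) as [N HN];
    exists N; intros n m hn hm; apply HN; auto.
Qed.

Lemma XL_lim t : is_lim_seq (fun n => PXn n (Rmax 0 t)) (XL t).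
Proof. apply Lim_seq_correct'. apply cv_seq. Qed.
Lemma WL_lim t : is_lim_seq (fun n => PWn n (Rmax 0 t)) (WL t).
Proof. apply Lim_seq_correct'. apply cv_seq. Qed.

Lemma L_bound n t : 0 <= t ->
  Rabs (XL t - PXn n t) <= 2 * M0 * exp (lam * t) * (/2)^n /\
  Rabs (WL t - PWn n t) <= 2 * M0 * exp (lam * t) * (/2)^n.
Proof.
  intros ht. assert (E : Rmax 0 t = t) by (apply Rmax_right; lra).
  split.
  - apply (lim_bound _ _ _ _ n (XL_lim t)). intros m hm. rewrite E.
    apply (cauchy_bound' a b c d mu u x0 w0 hb hd hmu n m t ht hm).
  - apply (lim_bound _ _ _ _ n (WL_lim t)). intros m hm. rewrite E.
    apply (cauchy_bound' a b c d mu u x0 w0 hb hd hmu n m t ht hm).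
Qed.

Lemma L_lip : (forall s s', Rabs (XL s - XL s') <= B * Rabs (s - s')) /\
              (forall s s', Rabs (WL s - WL s') <= B * Rabs (s - s')).
Proof.
  pose proof (hB a b c d mu u hb hd hmu).
  split; intros s s'.
  - apply (lim_bound2 _ _ _ _ _ (XL_lim s) (XL_lim s')). intros m.
    eapply Rle_trans. apply (pic_lip a b c d mu u x0 w0 hb hd hmu m).
    apply Rmult_le_compat_l. lra. apply Rmax_lip.
  - apply (lim_bound2 _ _ _ _ _ (WL_lim s) (WL_lim s')). intros m.
    eapply Rle_trans. apply (pic_lip a b c d mu u x0 w0 hb hd hmu m).
    apply Rmult_le_compat_l. lra. apply Rmax_lip.
Qed.

Definition hXL s := G1 (XL s) (WL s).
Definition hWL s := Gw (XL s) (WL s).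

Lemma hL_cont : (forall s, continuous hXL s) /\ (forall s, continuous hWL s).
Proof. destruct L_lip as [H1 H2]. apply (comp_lip a b c d mu u hb hd hmu _ _ H1 H2). Qed.

Lemma int_eq t : 0 <= t -> XL t = x0 + RInt hXL 0 t /\ WL t = w0 + RInt hWL 0 t.
Proof.
  intros ht. pose proof (hL a b c d mu u hb hd hmu). pose proof (hM0 a b c d mu u hb hd hmu).
  pose proof (exp_pos (lam * t)).
  destruct hL_cont as [C1 C2].
  set (C := 2 * M0 * exp (lam * t) + M0 * exp (lam * t)).
  assert (hC : 0 <= C) by (unfold C; nra).
  assert (Hgen : forall n s, 0 <= s -> Rabs (PXn n s - XL s) + Rabs (PWn n s - WL s) <= 4 * M0 * (/2)^n * exp (lam * s)).
  { intros n s hs. destruct (L_bound n s hs) as [Hq1 Hq2].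
    rewrite Rabs_minus_sym, (Rabs_minus_sym (PWn n s)). lra. }
  split.
  - assert (Z : XL t - (x0 + RInt hXL 0 t) = 0); [|lra].
    apply (small_zero _ C hC). intros n.
    destruct (L_bound (S n) t ht) as [Hb1 _].
    destruct (h_cont a b c d mu u x0 w0 hb hd hmu n) as [C3 _].
    assert (E : XL t - (x0 + RInt hXL 0 t) = (XL t - PXn (S n) t) + RInt (fun s => hx a b c d mu u x0 w0 n s - hXL s) 0 t).
    { rewrite (PX_S a b c d mu u x0 w0 n t).
      rewrite (RInt_minus (V:=R_CompleteNormedModule)) by (apply ex_RInt_cont; auto).
      unfold minus, plus, opp; simpl. ring. }
    rewrite E. eapply Rle_trans. apply Rabs_triang.
    assert (B2 : Rabs (RInt (fun s => hx a b c d mu u x0 w0 n s - hXL s) 0 t) <= L * (4 * M0 * (/2)^n) * exp (lam * t) / lam).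
    { apply int_exp_bound; auto. lra.
      - intros s. apply (continuous_minus (V:=R_NormedModule)); auto.
      - intros s hs. unfold hx, hXL. eapply Rle_trans. apply Gx_lip; auto.
        rewrite Rmult_assoc. apply Rmult_le_compat_l. lra. apply Hgen. lra. }
    assert (E2 : L * (4 * M0 * (/2)^n) * exp (lam * t) / lam = M0 * exp (lam * t) * (/2)^n) by (field; lra).
    assert (E3 : 2 * M0 * exp (lam * t) * (/ 2) ^ S n <= 2 * M0 * exp (lam * t) * (/ 2) ^ n).
    { simpl. pose proof (pow_le (/2) n ltac:(lra)).
      assert (0 <= 2 * M0 * exp (lam * t) * (/2)^n) by (apply Rmult_le_pos; [nra|lra]). lra. }
    unfold C. lra.
  - assert (Z : WL t - (w0 + RInt hWL 0 t) = 0); [|lra].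
    apply (small_zero _ C hC). intros n.
    destruct (L_bound (S n) t ht) as [_ Hb1].
    destruct (h_cont a b c d mu u x0 w0 hb hd hmu n) as [_ C3].
    assert (E : WL t - (w0 + RInt hWL 0 t) = (WL t - PWn (S n) t) + RInt (fun s => hw a b c d mu u x0 w0 n s - hWL s) 0 t).
    { rewrite (PW_S a b c d mu u x0 w0 n t).
      rewrite (RInt_minus (V:=R_CompleteNormedModule)) by (apply ex_RInt_cont; auto).
      unfold minus, plus, opp; simpl. ring. }
    rewrite E. eapply Rle_trans. apply Rabs_triang.
    assert (B2 : Rabs (RInt (fun s => hw a b c d mu u x0 w0 n s - hWL s) 0 t) <= L * (4 * M0 * (/2)^n) * exp (lam * t) / lam).
    { apply int_exp_bound; auto. lra.
      - intros s. apply (continuous_minus (V:=R_NormedModule)); auto.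
      - intros s hs. unfold hw, hWL. eapply Rle_trans. apply (Gw_lip a b c d mu u); auto.
        rewrite Rmult_assoc. apply Rmult_le_compat_l. lra. apply Hgen. lra. }
    assert (E2 : L * (4 * M0 * (/2)^n) * exp (lam * t) / lam = M0 * exp (lam * t) * (/2)^n) by (field; lra).
    assert (E3 : 2 * M0 * exp (lam * t) * (/ 2) ^ S n <= 2 * M0 * exp (lam * t) * (/ 2) ^ n).
    { simpl. pose proof (pow_le (/2) n ltac:(lra)).
      assert (0 <= 2 * M0 * exp (lam * t) * (/2)^n) by (apply Rmult_le_pos; [nra|lra]). lra. }
    unfold C. lra.
Qed.

Lemma L_derive t : 0 < t -> is_derive XL t (hXL t) /\ is_derive WL t (hWL t).
Proof.
  intros ht. destruct hL_cont as [C1 C2].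
  assert (Hloc : locally t (fun s => 0 < s)).
  { exists (mkposreal t ht). intros s Hs. change (Rabs (s - t) < t) in Hs.
    apply Rabs_def2 in Hs. lra. }
  split.
  - apply (is_derive_ext_loc (fun s => x0 + RInt hXL 0 s)).
    { apply (filter_imp (fun s => 0 < s)); auto. intros s hs. symmetry. apply int_eq. lra. }
    apply derive_const_plus. apply (is_derive_RInt (V:=R_CompleteNormedModule) _ _ 0); auto.
    apply filter_forall. intros z. apply RInt_correct. apply ex_RInt_cont; auto.
  - apply (is_derive_ext_loc (fun s => w0 + RInt hWL 0 s)).
    { apply (filter_imp (fun s => 0 < s)); auto. intros s hs. symmetry. apply int_eq. lra. }
    apply derive_const_plus. apply (is_derive_RInt (V:=R_CompleteNormedModule) _ _ 0); auto.
    apply filter_forall. intros z. apply RInt_correct. apply ex_RInt_cont; auto.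
Qed.
End Lim.

Section Sol.
Variables a b c d mu u : R.
Hypotheses (hb : 0 < b) (hd : 0 < d) (hmu : 0 < mu).

Lemma solution_exists x0 r0 : 0 < x0 < 1 -> 0 < r0 < 1 ->
  exists X Y, is_solution a b c d mu u X Y /\ X 0 = x0 /\ Y 0 = r0.
Proof.
  intros hx hr.
  set (w0 := ln (r0 / (1 - r0))).
  set (X := XL a b c d mu u x0 w0). set (W := WL a b c d mu u x0 w0).
  set (Y := fun t => lg (W t)).
  destruct (L_lip a b c d mu u x0 w0 hb hd hmu) as [LX LW].
  pose proof (hB a b c d mu u hb hd hmu) as hB0.
  assert (CX : forall t, continuous X t).
  { intros t. apply (lip_cont _ (BB a b c d mu u)). lra. exact LX. }
  assert (CY : forall t, continuous Y t).
  { intros t. apply (lip_cont _ (BB a b c d mu u)). lra. intros s s'.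
    unfold Y. eapply Rle_trans. apply lg_lip. apply LW. }
  assert (HX0 : X 0 = x0).
  { unfold X. destruct (int_eq a b c d mu u x0 w0 hb hd hmu 0 (Rle_refl 0)) as [E _].
    rewrite E, RInt_point. unfold zero; simpl. ring. }
  assert (HW0 : W 0 = w0).
  { unfold W. destruct (int_eq a b c d mu u x0 w0 hb hd hmu 0 (Rle_refl 0)) as [_ E].
    rewrite E, RInt_point. unfold zero; simpl. ring. }
  assert (Hder : forall t, 0 < t -> is_derive X t (hXL a b c d mu u x0 w0 t) /\
                                   is_derive W t (hWL a b c d mu u x0 w0 t)).
  { intros t ht. apply L_derive; auto. }
  set (f := fun (i : nat) => match i with
      | O => fun s => (-1) * X s + 0 * exp (0 * s) + 0
      | _ => fun s => 1 * X s + 0 * exp (0 * s) + (-1) end).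
  set (f' := fun (i : nat) => match i with
      | O => fun s => (-1) * hXL a b c d mu u x0 w0 s + 0 * (0 * exp (0 * s))
      | _ => fun s => 1 * hXL a b c d mu u x0 w0 s + 0 * (0 * exp (0 * s)) end).
  assert (Hrange : forall t, 0 <= t -> 0 <= X t <= 1).
  { intros t ht.
    assert (H := cont_ind_fam 2 f f').
    assert (Hf : forall i, (i < 2)%nat -> f i t <= 0).
    { apply H; auto.
      - intros i Hi. destruct i as [|[|i]]; try lia; simpl;
        apply rce_lin; [apply rce_of_cont; apply CX | apply rce_exp | apply rce_of_cont; apply CX | apply rce_exp].
      - intros i s Hi Hs. destruct i as [|[|i]]; try lia; simpl; apply deriv_lin; apply Hder; auto.
      - intros i Hi. destruct i as [|[|i]]; try lia; simpl; rewrite HX0; lra.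
      - intros i s Hi Hs Hall Hz. destruct i as [|[|i]]; try lia; simpl in Hz |- *;
        unfold hXL, Gx.
        + assert (E : X s = 0) by lra. unfold X in E. rewrite E.
          rewrite (clip_id 0) by lra. unfold Fx. lra.
        + assert (E : X s = 1) by lra. unfold X in E. rewrite E.
          rewrite (clip_id 1) by lra. unfold Fx. lra. }
    pose proof (Hf 0%nat ltac:(lia)). pose proof (Hf 1%nat ltac:(lia)). simpl in *. lra. }
  exists X, Y. split; [|split; auto].
  2: { unfold Y. rewrite HW0. apply lg_logit; auto. }
  split; [|split; apply cont_at_right; auto].
  intros t ht. destruct (Hder t ht) as [D1 D2]. split.
  - replace (Fx a b c d mu u (X t) (Y t)) with (hXL a b c d mu u x0 w0 t); auto.
    unfold hXL, Gx. rewrite clip_id by (apply Hrange; lra). reflexivity.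
  - unfold Y. 
    assert (D3 := is_derive_comp (K:=R_AbsRing) (V:=R_NormedModule) lg W t _ _ (lg_derive (W t)) D2).
    replace (Fr (X t) (lg (W t))) with (scal (hWL a b c d mu u x0 w0 t) (lg (W t) * (1 - lg (W t)))).
    exact D3.
    unfold scal; simpl; unfold mult; simpl. unfold hWL, Gw, Fr.
    rewrite clip_id by (apply Hrange; lra). fold X. ring.
Qed.

Lemma unstable_r1 x1 : 0 < x1 < 1/2 -> unstable a b c d mu u x1 1.
Proof.
  intros hx Hst.
  set (e0 := (1/2 - x1) / 2).
  assert (he0 : 0 < e0) by (unfold e0; lra).
  destruct (Hst e0 he0) as [delta [hdel Hdel]].
  set (s0 := Rmin delta e0 / 2).
  assert (hs0 : 0 < s0) by (unfold s0; pose proof (Rmin_pos _ _ hdel he0); lra).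
  assert (hs1 : s0 < delta) by (unfold s0; pose proof (Rmin_l delta e0); pose proof (Rmin_pos _ _ hdel he0); lra).
  assert (hs2 : s0 < e0) by (unfold s0; pose proof (Rmin_r delta e0); pose proof (Rmin_pos _ _ hdel he0); lra).
  destruct (solution_exists x1 (1 - s0) ltac:(lra) ltac:(unfold e0 in *; lra)) as [X [Y [Hsol [HX0 HY0]]]].
  assert (Hd0 : dist2 (X 0) (Y 0) x1 1 < delta).
  { rewrite HX0, HY0. unfold dist2.
    replace ((x1 - x1)^2 + (1 - s0 - 1)^2) with (s0^2) by ring. rewrite sqrt_pow2; lra. }
  assert (HI : inI (X 0) (Y 0)) by (rewrite HX0, HY0; unfold inI, e0 in *; lra).
  assert (Hb : forall t, 0 <= t -> Rabs (X t - x1) < e0 /\ Rabs (Y t - 1) < e0).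
  { intros t ht. pose proof (Hdel X Y Hsol HI Hd0 t ht).
    pose proof (dist2_ge1 (X t) (Y t) x1 1). pose proof (dist2_ge2 (X t) (Y t) x1 1). lra. }
  set (ka := (1/2 - x1) / 4).
  assert (hka : 0 < ka) by (unfold ka; lra).
  destruct Hsol as [Hder [_ HYr]].
  set (f := fun (_ : nat) => fun s => 1 * Y s + (s0 / 2) * exp (ka * s) + (-1)).
  set (f' := fun (_ : nat) => fun s => 1 * Fr (X s) (Y s) + (s0 / 2) * (ka * exp (ka * s))).
  assert (Hf : forall t, 0 <= t -> f 0%nat t <= 0).
  { intros t ht. apply (cont_ind_fam 1 f f'); auto.
    - intros i Hi. unfold f. apply rce_lin. apply rce_of_filterlim; auto. apply rce_exp.
    - intros i s Hi Hs. unfold f, f'. apply deriv_lin. apply Hder; auto.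
    - intros i Hi. unfold f. rewrite HY0, Rmult_0_r, exp_0. lra.
    - intros i s Hi Hs Hall Hz. unfold f, f' in *. unfold Fr.
      destruct (Hb s ltac:(lra)) as [B1 B2].
      apply Rabs_def2 in B1. apply Rabs_def2 in B2.
      set (E := exp (ka * s)) in *.
      assert (hE : 0 < E) by apply exp_pos.
      assert (Hs1 : 1 - Y s = s0 / 2 * E) by lra.
      assert (hp : 0 < s0 / 2 * E) by (apply Rmult_lt_0_compat; lra).
      assert (Hq : 2 * ka <= Y s * (1 - 2 * X s)).
      { assert (hY : 3/4 <= Y s) by (unfold e0 in *; lra).
        assert (hX : 1/2 - x1 <= 1 - 2 * X s) by (unfold e0 in *; lra).
        assert (0 <= (Y s - 3/4) * (1 - 2 * X s - (1/2 - x1))) by (apply Rmult_le_pos; lra).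
        unfold ka. nra. }
      rewrite Hs1.
      assert (Hm : (s0 / 2 * E) * (2 * ka) <= (s0 / 2 * E) * (Y s * (1 - 2 * X s))) by
        (apply Rmult_le_compat_l; lra).
      assert (Hm2 : (s0 / 2 * E) * ka < (s0 / 2 * E) * (2 * ka)) by (apply Rmult_lt_compat_l; lra).
      lra. }
  set (T := 2 * e0 / (s0 * ka)).
  assert (hT : 0 <= T) by (unfold T; apply Rlt_le, Rdiv_lt_0_compat; nra).
  specialize (Hf T hT). unfold f in Hf.
  destruct (Hb T hT) as [_ B2]. apply Rabs_def2 in B2.
  assert (Hexp : ka * T < exp (ka * T)) by (pose proof (exp_ineq1_le (ka * T)); lra).
  assert (s0 / 2 * (ka * T) = e0) by (unfold T; field; lra).
  assert (s0 / 2 * (ka * T) < s0 / 2 * exp (ka * T)) by (apply Rmult_lt_compat_l; lra).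
  lra.
Qed.

Lemma unstable_r0 x1 : 1/2 < x1 < 1 -> unstable a b c d mu u x1 0.
Proof.
  intros hx Hst.
  set (e0 := Rmin ((x1 - 1/2) / 2) (1/4)).
  assert (he0 : 0 < e0) by (unfold e0; apply Rmin_pos; lra).
  assert (he1 : e0 <= (x1 - 1/2) / 2) by apply Rmin_l.
  assert (he2 : e0 <= 1/4) by apply Rmin_r.
  destruct (Hst e0 he0) as [delta [hdel Hdel]].
  set (s0 := Rmin delta e0 / 2).
  assert (hs0 : 0 < s0) by (unfold s0; pose proof (Rmin_pos _ _ hdel he0); lra).
  assert (hs1 : s0 < delta) by (unfold s0; pose proof (Rmin_l delta e0); pose proof (Rmin_pos _ _ hdel he0); lra).
  assert (hs2 : s0 < e0) by (unfold s0; pose proof (Rmin_r delta e0); pose proof (Rmin_pos _ _ hdel he0); lra).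
  destruct (solution_exists x1 s0 ltac:(lra) ltac:(lra)) as [X [Y [Hsol [HX0 HY0]]]].
  assert (Hd0 : dist2 (X 0) (Y 0) x1 0 < delta).
  { rewrite HX0, HY0. unfold dist2.
    replace ((x1 - x1)^2 + (s0 - 0)^2) with (s0^2) by ring. rewrite sqrt_pow2; lra. }
  assert (HI : inI (X 0) (Y 0)) by (rewrite HX0, HY0; unfold inI; lra).
  assert (Hb : forall t, 0 <= t -> Rabs (X t - x1) < e0 /\ Rabs (Y t - 0) < e0).
  { intros t ht. pose proof (Hdel X Y Hsol HI Hd0 t ht).
    pose proof (dist2_ge1 (X t) (Y t) x1 0). pose proof (dist2_ge2 (X t) (Y t) x1 0). lra. }
  set (ka := (x1 - 1/2) / 4).
  assert (hka : 0 < ka) by (unfold ka; lra).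
  destruct Hsol as [Hder [_ HYr]].
  set (f := fun (_ : nat) => fun s => (-1) * Y s + (s0 / 2) * exp (ka * s) + 0).
  set (f' := fun (_ : nat) => fun s => (-1) * Fr (X s) (Y s) + (s0 / 2) * (ka * exp (ka * s))).
  assert (Hf : forall t, 0 <= t -> f 0%nat t <= 0).
  { intros t ht. apply (cont_ind_fam 1 f f'); auto.
    - intros i Hi. unfold f. apply rce_lin. apply rce_of_filterlim; auto. apply rce_exp.
    - intros i s Hi Hs. unfold f, f'. apply deriv_lin. apply Hder; auto.
    - intros i Hi. unfold f. rewrite HY0, Rmult_0_r, exp_0. lra.
    - intros i s Hi Hs Hall Hz. unfold f, f' in *. unfold Fr.
      destruct (Hb s ltac:(lra)) as [B1 B2].
      apply Rabs_def2 in B1. apply Rabs_def2 in B2.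
      set (E := exp (ka * s)) in *.
      assert (hE : 0 < E) by apply exp_pos.
      assert (Hs1 : Y s = s0 / 2 * E) by lra.
      assert (hp : 0 < s0 / 2 * E) by (apply Rmult_lt_0_compat; lra).
      assert (Hq : 2 * ka <= (1 - Y s) * (2 * X s - 1)).
      { assert (hY : 3/4 <= 1 - Y s) by lra.
        assert (hX : x1 - 1/2 <= 2 * X s - 1) by lra.
        assert (0 <= (1 - Y s - 3/4) * (2 * X s - 1 - (x1 - 1/2))) by (apply Rmult_le_pos; lra).
        unfold ka. nra. }
      rewrite Hs1.
      assert (Hm : (s0 / 2 * E) * (2 * ka) <= (s0 / 2 * E) * ((1 - Y s) * (2 * X s - 1))) by
        (apply Rmult_le_compat_l; lra).
      assert (Hm2 : (s0 / 2 * E) * ka < (s0 / 2 * E) * (2 * ka)) by (apply Rmult_lt_compat_l; lra).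
      rewrite Hs1 in Hm. lra. }
  set (T := 2 * e0 / (s0 * ka)).
  assert (hT : 0 <= T) by (unfold T; apply Rlt_le, Rdiv_lt_0_compat; nra).
  specialize (Hf T hT). unfold f in Hf.
  destruct (Hb T hT) as [_ B2]. apply Rabs_def2 in B2.
  assert (Hexp : ka * T < exp (ka * T)) by (pose proof (exp_ineq1_le (ka * T)); lra).
  assert (s0 / 2 * (ka * T) = e0) by (unfold T; field; lra).
  assert (s0 / 2 * (ka * T) < s0 / 2 * exp (ka * T)) by (apply Rmult_lt_compat_l; lra).
  lra.
Qed.
End Sol.


Theorem lemma19 (a b c d mu u xs : R)
  (ha : 0 < a) (hb : 0 < b) (hc : 0 < c) (hd : 0 < d)
  (hmu : 0 < mu <= 1) (hu : (c + d) / 2 < u)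
  (hxs : 1 / 2 < xs < 1) (heq : Fx a b c d mu u xs 1 = 0) :
  loc_asymp_stable a b c d mu u xs 1 /\
  (forall x r, is_equilibrium a b c d mu u x r -> (x, r) <> (xs, 1) ->
     unstable a b c d mu u x r).
Proof.
  split.
  - eapply stable_part; eauto.
  - intros x r Heq Hne.
    destruct (other_equilibria a b c d mu u xs ha hb hc hd hmu hu hxs heq x r Heq Hne)
      as [[Hr Hx]|[Hr Hx]]; subst r.
    + apply unstable_r1; auto; lra.
    + apply unstable_r0; auto; lra.
Qed.
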